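(* Let $q$ be a prime power and $s$ an odd integer, and let $G$ be an abelian group with $|G|=(q^s+1)(q^{2s}+1)$ which contains a difference set with parameters \[ (v,k,\lambda)=\left(\frac{q^{4s}-1}{q^s-1},\frac{q^{3s}-1}{q^s-1},\frac{q^{2s}-1}{q^s-1}\right). \] Let $\tau$ be the automorphism $\tau:x\mapsto x^{q^4}$ of $G$, and let $G^\tau$ denote the subgroup of fixed points of $\tau$. Let $M$ be any subgroup of $G$ of order $(q+1)(q^2+1)$. Then $M\le G^\tau$. Furthermore, let $b=\gcd(q+1,s)$ and $c=\gcd(q^2+1,s)$; if the Sylow $r$-subgroup of $G$ is cyclic for every prime $r$ dividing $b$ or $c$, then $M=G^\tau$.
   Context: A $(v,k,\lambda)$-difference set in an abelian group $G$ of order $v$ is a $k$-subset $D$ such that every non-identity element of $G$ is of the form $d_1d_2^{-1}$ with $d_1,d_2\in D$ in exactly $\lambda$ ways. *)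

(* Defs.v *)
From mathcomp Require Import all_boot all_fingroup all_solvable.
Set Implicit Arguments. Unset Strict Implicit. Unset Printing Implicit Defensive.
Local Open Scope group_scope.

Definition prime_power (q : nat) : Prop :=
  exists p e : nat, [/\ prime p, (0 < e)%N & q = (p ^ e)%N].

Definition difference_set (gT : finGroupType) (G : {set gT}) (D : {set gT})
    (v k lam : nat) : Prop :=
  [/\ #|G| = v, D \subset G, #|D| = k &
      forall g, g \in G -> g != 1 ->
        #|[set p in setX D D | p.1 * p.2^-1 == g]| = lam].

Definition fixed_tau (gT : finGroupType) (G : {set gT}) (q : nat) : {set gT} :=
  [set x in G | x ^+ (q ^ 4) == x].

(* Main.v *)
Require Import Defs.
From mathcomp Require Import all_boot all_fingroup all_solvable.
From mathcomp Require Import all_order all_algebra.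
From mathcomp Require Import ring.
Import GRing.Theory Num.Theory.
Local Open Scope ring_scope.
Lemma geo (x : int) (n : nat) : exists K : int,
  (x - 1) ^+ n = (-1) ^+ n * (1 - n%:R * x) + x ^+ 2 * K.
Proof.
elim: n => [|n [K IH]]; first by exists 0; rewrite !expr0; ring.
exists ((-1)^+n * (- n%:R) + (x - 1) * K).
rewrite !exprS IH -[n.+1]addn1 natrD; ring.
Qed.

Lemma fact1 (q s : nat) : odd s -> exists A : nat,
  (q ^ s + 1 = (q + 1) * A)%N /\ forall r : nat, (r %| q + 1)%N -> (r %| A)%N -> (r %| s)%N.
Proof.
move=> os.
have [K HK] := geo (q + 1)%:R s.
have e1 : ((q ^ s + 1)%N%:R : int) = (q + 1)%:R * (s%:R + (q+1)%:R * K).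
  rewrite natrD natrX; have -> : (q%:R : int) = (q + 1)%:R - 1 by rewrite natrD; ring.
  rewrite HK -signr_odd os expr1; ring.
have hd : ((q + 1)%N %| (q ^ s + 1)%N)%N.
  have : (((q + 1)%N%:R : int) %| (q ^ s + 1)%N%:R)%Z by rewrite e1; apply: dvdz_mulr.
  by rewrite !natz dvdzE.
exists ((q ^ s + 1) %/ (q + 1))%N; split; first by rewrite mulnC divnK.
move=> r hr hA.
have eA : (((q ^ s + 1) %/ (q + 1))%N%:R : int) = s%:R + (q+1)%:R * K.
  apply: (mulfI (x := (q + 1)%:R)); first by rewrite pnatr_eq0 addn1.
  by rewrite -e1 -natrM mulnC divnK.
have : (r%:Z %| s%:Z)%Z.
  have -> : (s%:Z) = ((q ^ s + 1) %/ (q + 1))%N%:R - (q+1)%:R * K by rewrite eA; ring.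
  apply: rpredB; first by rewrite natz dvdzE.
  by apply: dvdz_mulr; rewrite natz dvdzE.
by rewrite dvdzE.
Qed.
Local Close Scope ring_scope.
From mathcomp Require Import zify.

Lemma H1 (r y m : nat) : prime r -> r %| y - 1 -> 0 < y -> r %| y ^ m + 1 -> r = 2.
Proof.
move=> pr /dvdnP [c hc] y0 hd.
have ey : y = c * r + 1 by lia.
have : y ^ m + 1 = 2 %[mod r].
  by rewrite -modnDml ey modnMDXl exp1n modnDml.
move=> e; move: hd; rewrite /dvdn e => hd2.
move: hd2; rewrite -/(dvdn r 2); move/(dvdn_leq (isT : 0 < 2)) => hl; have := prime_gt1 pr; lia.
Qed.

Lemma H2 (r x : nat) : prime r -> r %| x + 1 -> r %| x - 1 -> 0 < x -> r = 2.
Proof.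
move=> pr h1 h2 x0; have := dvdn_sub h1 h2.
have -> : x + 1 - (x - 1) = 2 by lia.
move/(dvdn_leq (isT : 0 < 2)) => hl; have := prime_gt1 pr; lia.
Qed.

Lemma sq1 x : x ^ 2 - 1 = (x - 1) * (x + 1).
Proof. by have := subn_sqr x 1; rewrite exp1n. Qed.

Lemma cop (r a m : nat) : prime r -> r.-nat a -> ~~ (r %| m) -> coprime a m.
Proof. by move=> pr ha hm; apply: (pnat_coprime ha); rewrite p'natE. Qed.

Arguments cop {r a m}.
Arguments H1 {r y m}.
Arguments H2 {r x}.

Lemma nt_main (q s r a : nat) : 1 < q -> odd s -> prime r -> r.-nat a ->
  a %| (q ^ s + 1) * (q ^ (2 * s) + 1) -> (r %| a -> r %| q ^ 4 - 1) ->
  ((r %| gcdn (q + 1) s) || (r %| gcdn (q ^ 2 + 1) s) -> a %| q ^ 4 - 1) ->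
  a %| (q + 1) * (q ^ 2 + 1).
Proof.
move=> q1 os pr ra hN hn hc.
have [A [eA hA]] := fact1 q s os.
have [A' [eA' hA']] := fact1 (q ^ 2) s os.
have eq2s : q ^ (2 * s) = (q ^ 2) ^ s by rewrite expnM.
have eN : (q ^ s + 1) * (q ^ (2 * s) + 1) = ((q + 1) * (q ^ 2 + 1)) * (A * A').
  by rewrite eq2s eA eA' mulnACA.
have en : q ^ 4 - 1 = (q - 1) * ((q + 1) * (q ^ 2 + 1)).
  have -> : q ^ 4 = (q ^ 2) ^ 2 by rewrite -expnM.
  by rewrite sq1 sq1 mulnA.
have [k ek] := p_natP ra.
case: k ek => [|k] ek; first by rewrite ek expn0 dvd1n.
have ra1 : r %| a by rewrite ek dvdn_exp.
have rN : r %| (q ^ s + 1) * (q ^ (2 * s) + 1) := dvdn_trans ra1 hN.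
have rn := hn ra1.
have q0 : 0 < q by lia.
have gauss : ~~ (r %| A * A') -> a %| (q + 1) * (q ^ 2 + 1).
  by move=> h; rewrite -(Gauss_dvdl _ (cop pr ra h)) -eN.
have gaussn : ~~ (r %| q - 1) -> (r %| gcdn (q + 1) s) || (r %| gcdn (q ^ 2 + 1) s) ->
    a %| (q + 1) * (q ^ 2 + 1).
  by move=> h1 h2; rewrite -(Gauss_dvdr _ (cop pr ra h1)) -en hc.
have rq1 : r %| q ^ 2 + 1 -> r %| q - 1 -> r = 2.
  move=> h1 h2; apply: (H2 pr h1) => //; last by rewrite expn_gt0 q0.
  apply: (dvdn_trans h2); rewrite sq1 dvdn_mulr //.
have qq : r %| q + 1 -> r %| q ^ 2 - 1.
  by move=> h; rewrite sq1 dvdn_mull.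
case: (eqVneq r 2) => [r2 | rn2].
  apply: gauss; rewrite Euclid_dvdM // negb_or; subst r; apply/andP; split.
  - apply/negP => h2; have : 2 %| q + 1.
      have : 2 %| q ^ s + 1 by rewrite eA dvdn_mull.
      by rewrite !dvdn2 !oddD oddX /= (negbTE (_ : s != 0)) //; apply/eqP => s0; rewrite s0 in os.
    move=> hq; have := hA 2 hq h2; by rewrite dvdn2 os.
  - apply/negP => h2; have : 2 %| q ^ 2 + 1.
      have : 2 %| q ^ (2 * s) + 1 by rewrite eq2s eA' dvdn_mull.
      have s0 : (2 * s == 0) = false.
        by rewrite muln_eq0 /=; apply/negbTE/eqP => h0; rewrite h0 in os.
      by rewrite !dvdn2 !oddD !oddX /= s0.
    move=> hq; have := hA' 2 hq h2; by rewrite dvdn2 os.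
rewrite en !Euclid_dvdM // in rn.
case/or3P: rn => [r1 | r1 | r1].
- exfalso; move: rN; rewrite Euclid_dvdM // => /orP [] h.
  + by move/eqP: rn2; apply; apply: (H1 pr r1 q0 h).
  + by move/eqP: rn2; apply; apply: (H1 pr r1 q0 h).
- case: (boolP (r %| s)) => rs.
  + apply: gaussn; last by rewrite dvdn_gcd r1 rs.
    by apply/negP => h; move/eqP: rn2; apply; apply: (H2 pr r1 h q0).
  + apply: gauss; rewrite Euclid_dvdM // negb_or; apply/andP; split.
    * by apply/negP => h; move/negP: rs; apply; apply: hA.
    * apply/negP => h; move/eqP: rn2; apply; apply: (H1 (m := s) pr (qq r1)); first by rewrite expn_gt0 q0.
      by apply: dvdn_trans h _; rewrite eA' dvdn_mull.
- case: (boolP (r %| s)) => rs.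
  + apply: gaussn; last by rewrite !dvdn_gcd r1 rs andbT orbT.
    by apply/negP => h; move/eqP: rn2; apply; apply: rq1.
  + apply: gauss; rewrite Euclid_dvdM // negb_or; apply/andP; split; last first.
    * by apply/negP => h; move/negP: rs; apply; apply: hA'.
    * apply/negP => h; move/eqP: rn2; apply.
      have h1 : r %| q ^ s + 1 by rewrite eA dvdn_mull.
      have h3 : r %| (q ^ s) ^ 2 + 1.
        by rewrite -expnM mulnC eq2s eA' dvdn_mulr.
      apply: (H2 pr h3); last by rewrite expn_gt0 expn_gt0 q0.
      by rewrite sq1 dvdn_mull.
Qed.

Lemma en_lem (q : nat) : 0 < q -> q ^ 4 - 1 = (q - 1) * ((q + 1) * (q ^ 2 + 1)).
Proof.
move=> q0; have -> : q ^ 4 = (q ^ 2) ^ 2 by rewrite -expnM.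
by rewrite sq1 sq1 mulnA.
Qed.

Local Open Scope group_scope.

Theorem lemma4p1 (q s : nat) (gT : finGroupType) (G M : {group gT}) (D : {set gT}) :
  prime_power q -> odd s -> abelian G ->
  #|G| = ((q ^ s + 1) * (q ^ (2 * s) + 1))%N ->
  difference_set G D ((q ^ (4 * s) - 1) %/ (q ^ s - 1))
                     ((q ^ (3 * s) - 1) %/ (q ^ s - 1))
                     ((q ^ (2 * s) - 1) %/ (q ^ s - 1)) ->
  M \subset G -> #|M| = ((q + 1) * (q ^ 2 + 1))%N ->
  M \subset fixed_tau G q /\
  ((forall (r : nat) (P : {group gT}), prime r ->
       (r %| gcdn (q + 1) s)%N || (r %| gcdn (q ^ 2 + 1) s)%N ->
       r.-Sylow(G) P -> cyclic P) ->
   M :=: fixed_tau G q).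
Proof.
move=> [p [e [pp e0 eq]]] os abG hG _ sMG hM.
have q1 : (1 < q)%N.
  rewrite eq; have := prime_gt1 pp; case: e e0 {eq} => // e _ hp.
  by rewrite expnS; have := expn_gt0 p e; rewrite (ltnW hp) /=; nia.
have q0 : (0 < q)%N by lia.
set n := (q ^ 4 - 1)%N.
have eq4 : (q ^ 4 = n.+1)%N by rewrite /n; have := expn_gt0 q 4; rewrite q0; lia.
have hfix : fixed_tau G q = 'Ldiv_n(G).
  apply/setP => x; rewrite inE; apply/andP/LdivP => [[xG hx] | [xG hx]]; split => //.
    apply: (mulIg x); rewrite mul1g -expgSr -eq4; exact/eqP.
  by rewrite eq4 expgSr hx mul1g.
have sLG : 'Ldiv_n(G) \subset G by apply/subsetP => x /LdivP [].
split.
  rewrite hfix; apply/subsetP => x xM; apply/LdivP; split; first exact: (subsetP sMG).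
  by rewrite /n en_lem // -hM mulnC expgM expg_cardG // expg1n.
move=> hcyc; rewrite hfix.
set L := Group (group_Ldiv n abG).
have sML : M \subset L.
  apply/subsetP => x xM; apply/LdivP; split; first exact: (subsetP sMG).
  by rewrite /n en_lem // -hM mulnC expgM expg_cardG // expg1n.
apply/eqP; rewrite eqEcard sML /=.
apply: dvdn_leq; first exact: cardG_gt0.
change (#|L| %| #|M|)%N.
apply/(dvdn_partP _ (cardG_gt0 L)) => r; rewrite mem_primes => /and3P [pr _ _].
have [S sylS] := Sylow_exists r L.
rewrite -(card_Hall sylS) hM.
have sSL := pHall_sub sylS.
have sSG : S \subset G := subset_trans sSL sLG.
have inS : forall x, x \in S -> x ^+ n = 1.
  by move=> x xS; have /LdivP [] := subsetP sSL x xS.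
have rS : r.-nat #|S| := pHall_pgroup sylS.
apply: (nt_main _ _ _ _ q1 os pr rS).
- by rewrite -hG; apply: cardSg.
- move=> h; have [x xS ox] := Cauchy pr h.
  by rewrite -ox order_dvdn inS.
- move=> hc.
  have [P sylP sSP] := Sylow_superset sSG (pHall_pgroup sylS).
  have cS := cyclicS sSP (hcyc r P pr hc sylP).
  case/cyclicP: cS => x eS.
  rewrite eS -orderE order_dvdn inS //.
  by rewrite eS cycle_id.
Qed.
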